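(* Let $k$ be a fixed complex number. For every integer $n>0$, $$(\Lambda_{\Omega}\ast\beta_k)(n)=\Omega(n)\beta_k(n)-\beta_k(n).$$
   Context: $\Omega(n)=\sum_{p^\alpha\parallel n}\alpha$ is the number of prime factors of $n$ counted with multiplicity. $\Lambda_\Omega(n)=1$ if $n=p^k$ for some prime $p$ and integer $k\geq1$, and $\Lambda_\Omega(n)=0$ otherwise. $\beta_k(n)=\sum_{p\mid n}p^k$ is the sum of the $k$-th powers of the distinct prime factors of $n$. $\ast$ is Dirichlet convolution $(F\ast G)(n)=\sum_{d\mid n}F(d)G(n/d)$. *)

(* Defs.v *)
From HB Require Import structures.
From mathcomp Require Import all_boot all_order all_algebra.
From mathcomp Require Import all_classical all_reals all_analysis.
From mathcomp Require Import complex.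
Set Implicit Arguments. Unset Strict Implicit. Unset Printing Implicit Defensive.
Import Order.TTheory GRing.Theory Num.Theory.
Local Open Scope ring_scope.
Local Open Scope complex_scope.

(* Complex power x^k := exp(k * ln x) for a positive real base x, written out:
   exp((a + i b) ln x) = e^(a ln x) (cos(b ln x) + i sin(b ln x)). *)
Definition cpow (R : realType) (x : R) (k : R[i]) : R[i] :=
  let: a +i* b := k in
  (expR (a * ln x) * cos (b * ln x)) +i* (expR (a * ln x) * sin (b * ln x)).

Definition Omega_mult (n : nat) : nat := (\sum_(p <- primes n) logn p n)%N.

Definition LambdaOmega (R : realType) (n : nat) : R[i] :=
  if [exists p : 'I_n.+1, exists j : 'I_n.+1,
        [&& prime p, (0 < j)%N & n == (p ^ j)%N]] then 1 else 0.

Definition beta_pow (R : realType) (k : R[i]) (n : nat) : R[i] :=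
  \sum_(p <- primes n) cpow (p%:R : R) k.

Definition dconv (R : realType) (F G : nat -> R[i]) (n : nat) : R[i] :=
  \sum_(d <- divisors n) F d * G (n %/ d)%N.

(* Main.v *)
Require Import Defs.
From HB Require Import structures.
From mathcomp Require Import all_boot all_order all_algebra.
From mathcomp Require Import all_classical all_reals all_analysis.
From mathcomp Require Import complex.
From mathcomp Require Import ring.
Import Order.TTheory GRing.Theory Num.Theory.
Local Open Scope ring_scope.

Section Aux.
Variable R : realType.
Variable k : R[i].

Definition lamb (d : nat) : bool :=
  [exists p : 'I_d.+1, exists j : 'I_d.+1,
        [&& prime p, (0 < j)%N & d == (p ^ j)%N]].

Lemma beta_mulp p m e : prime p -> (0 < m)%N -> ~~ (p %| m)%N -> (0 < e)%N ->
  beta_pow k (m * p ^ e)%N = cpow (p%:R : R) k + beta_pow k m.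
Proof.
move=> pp m0 npm e0; rewrite /beta_pow.
transitivity (\sum_(q <- p :: primes m) cpow (q%:R : R) k); last by rewrite big_cons.
apply: perm_big.
apply: uniq_perm; first exact: primes_uniq.
  by rewrite cons_uniq primes_uniq andbT mem_primes (negbTE npm) !andbF.
move=> q; rewrite primesM //; last by rewrite expn_gt0 prime_gt0.
rewrite primesX // (primes_prime pp).
by rewrite !inE orbC.
Qed.

Lemma inner p n : (0 < n)%N -> p \in primes n ->
  \sum_(j <- iota 1 (logn p n)) beta_pow k (n %/ p ^ j)%N =
  (logn p n)%:R * beta_pow k n - cpow (p%:R : R) k.
Proof.
move=> n0 pn; have pp : prime p by move: pn; rewrite mem_primes => /and3P[].
have [m cpm nE] := pfactor_coprime pp n0.
have a0 : (0 < logn p n)%N by rewrite logn_gt0.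
have m0 : (0 < m)%N by move: n0; rewrite nE muln_gt0 => /andP[].
have npm : ~~ (p %| m)%N by rewrite -prime_coprime.
set a := logn p n in a0 nE *.
have bn : beta_pow k n = cpow (p%:R : R) k + beta_pow k m.
  by rewrite {1}nE beta_mulp.
have Hj : forall j, (j <= a)%N -> (n %/ p ^ j = m * p ^ (a - j))%N.
  move=> j ja; rewrite nE -{1}(subnK ja) expnD mulnA mulnK // expn_gt0 prime_gt0 //.
case: a a0 nE bn Hj => // a' _ nE bn Hj.
rewrite -[iota 1 a'.+1]/(index_iota 1 a'.+2) big_nat_recr //=.
rewrite Hj // subnn expn0 muln1.
rewrite (@eq_big_nat _ _ _ 1 a'.+1 _ (fun _ => beta_pow k n)); last first.
  move=> j /andP[j1 ja]; rewrite Hj ?(ltnW ja) // beta_mulp ?subn_gt0 //.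
rewrite sumr_const_nat subn1 /= bn mulr_natl.
rewrite mulrSr; set c := cpow _ _; set b := beta_pow k m.
rewrite [(c + b) *+ a']mulrnDl addrA.
by rewrite -(addrA _ c b) (addrC c b) addrA addrK.
Qed.

End Aux.

Theorem theorem3p1 (R : realType) (k : R[i]) (n : nat) (hn : (0 < n)%N) :
  dconv (@LambdaOmega R) (beta_pow k) n = (Omega_mult n)%:R * beta_pow k n - beta_pow k n.
Proof.
rewrite /dconv.
transitivity (\sum_(d <- divisors n | lamb d) beta_pow k (n %/ d)%N).
  rewrite [RHS]big_mkcond; apply: eq_bigr => d _; rewrite /LambdaOmega -/(lamb d).
  by case: (lamb d); rewrite ?mul1r ?mul0r.
rewrite -big_filter.
have pe : perm_eq (seq.filter lamb (divisors n))
   [seq (p ^ j)%N | p <- primes n, j <- iota 1 (logn p n)].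
  apply: uniq_perm; first by rewrite filter_uniq // divisors_uniq.
    apply: allpairs_uniq_dep; first exact: primes_uniq.
      by move=> p _; apply: iota_uniq.
    move=> [p j] [q l] /allpairsPdep [p1 [j1 [pn ji E1]]] /allpairsPdep [q1 [l1 [qn li E2]]].
    move: E1 E2 => [-> ->] [-> ->] /= E.
    have pp : prime p1 by move: pn; rewrite mem_primes => /and3P[].
    have qq : prime q1 by move: qn; rewrite mem_primes => /and3P[].
    have j0 : (0 < j1)%N by move: ji; rewrite mem_iota => /andP[].
    have l0 : (0 < l1)%N by move: li; rewrite mem_iota => /andP[].
    have epq : p1 = q1.
      by rewrite -(pdiv_pfactor j1.-1 pp) -(pdiv_pfactor l1.-1 qq) !prednK // E.
    subst q1.
    have ejl : j1 = l1 by rewrite -(pfactorK j1 pp) E pfactorK.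
    by subst l1.
  move=> d; rewrite mem_filter; apply/andP/allpairsPdep.
    move=> [/existsP [p /existsP [j /and3P [pp j0 /eqP dE]]] dd].
    have dn : (d %| n)%N by rewrite dvdn_divisors.
    exists (val p), (val j); split => //.
      rewrite mem_primes pp hn /=; apply: dvdn_trans dn.
      by move: (@dvdn_exp j p p j0 (dvdnn p)); rewrite -dE.
    rewrite mem_iota j0 /= add1n ltnS -pfactor_dvdn //.
    by rewrite -dE.
  move=> [p [j [pn ji ->]]].
  have pp : prime p by move: pn; rewrite mem_primes => /and3P[].
  move: ji; rewrite mem_iota add1n ltnS => /andP [j0 jl].
  split; last by rewrite -dvdn_divisors // pfactor_dvdn.
  apply/existsP.
  have hp : (p < (p ^ j).+1)%N.
    by rewrite ltnS -{1}(expn1 p) leq_pexp2l // prime_gt0.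
  have hj : (j < (p ^ j).+1)%N.
    by apply: ltnW; rewrite ltnS; apply: ltn_expl; rewrite prime_gt1.
  exists (Ordinal hp); apply/existsP; exists (Ordinal hj).
  by rewrite /= pp j0 eqxx.
rewrite (perm_big _ pe) big_allpairs_dep /=.
rewrite (eq_big_seq (fun p => (logn p n)%:R * beta_pow k n - cpow (p%:R : R) k)); last first.
  by move=> p pn; apply: inner.
by rewrite sumrB -mulr_suml -natr_sum.
Qed.
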